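(* Let $n$ be a positive integer, $g=3n+1$, and let $G=\{\ell_1<\dots<\ell_g\}$ be a symmetric pure $(2n)$-sparse gapset of genus $g$ with multiplicity $m$. Then $G$ has depth $4$, its canonical partition is $G=G_0\cup G_1\cup G_2\cup G_3$ with $G_3=\{\ell_g\}$ and $G_2=\{\ell_{g-1}\}$, and moreover $\ell_{g-1}=2m+1$, $\ell_g=3m+1$, $\#G_1=n$, and $\alpha=g-1$, where $\alpha=\max\{i:\ell_{i+1}-\ell_i=2n\}$.
   Context: A gapset is a finite set $G\subset\mathbb{N}=\{1,2,\dots\}$ such that whenever $z\in G$ and $z=x+y$ with $x,y\in\mathbb{N}$, then $x\in G$ or $y\in G$; its genus is $g=\#G$. Multiplicity $m(G)=\min\{s\in\mathbb{N}:s\notin G\}$; conductor $c(G)=\min\{s\in\mathbb{N}: s+t\notin G\ \forall t\in\mathbb{N}_0\}$; Frobenius number $F(G)=c(G)-1=\ell_g$; depth $q=\lceil c(G)/m(G)\rceil$. The canonical partition is $G=G_0\cup\dots\cup G_{q-1}$ with $G_i=G\cap[im+1,(i+1)m-1]$ (so $G_0=[1,m-1]$). $G$ is symmetric if $F(G)=2g-1$. $G$ is pure $\kappa$-sparse if $\ell_{i+1}-\ell_i\le\kappa$ for all $i$ with equality for some $i$. *)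

(* Defs.v *)
(* A gapset G = {l_1 < ... < l_g} is represented by the
   strictly increasing list s = [:: l_1; ...; l_g] of its elements. *)
From mathcomp Require Import all_boot.
Set Implicit Arguments. Unset Strict Implicit. Unset Printing Implicit Defensive.

(* 1-indexed access: ell s i = l_i *)
Definition ell (s : seq nat) (i : nat) : nat := nth 0 s i.-1.

Definition is_gapset (s : seq nat) : Prop :=
  sorted ltn s /\ (forall z, z \in s -> 0 < z) /\
  (forall z x y, z \in s -> 0 < x -> 0 < y -> x + y = z -> (x \in s) || (y \in s)).

Definition genus (s : seq nat) : nat := size s.

Definition is_multiplicity (s : seq nat) (m : nat) : Prop :=
  0 < m /\ m \notin s /\ (forall k, 0 < k -> k < m -> k \in s).

Definition frobenius (s : seq nat) : nat := ell s (size s).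
Definition conductor (s : seq nat) : nat := (frobenius s).+1.

(* depth q = ceil(c / m) *)
Definition depth (s : seq nat) (m : nat) : nat := (conductor s + m - 1) %/ m.

Definition block (s : seq nat) (m i : nat) : seq nat :=
  [seq x <- s | (i * m < x) && (x < i.+1 * m)].

Definition symmetric_gapset (s : seq nat) : Prop := frobenius s = 2 * genus s - 1.

Definition pure_sparse (kappa : nat) (s : seq nat) : Prop :=
  (forall i, 1 <= i < size s -> ell s i.+1 - ell s i <= kappa) /\
  (exists2 i, 1 <= i < size s & ell s i.+1 - ell s i = kappa).

Definition alpha (kappa : nat) (s : seq nat) : nat :=
  \max_(1 <= i < size s | ell s i.+1 - ell s i == kappa) i.

(* Main.v *)
Require Import Defs.
From mathcomp Require Import all_boot zify.
Set Implicit Arguments. Unset Strict Implicit.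

Lemma nth_ltE (s : seq nat) i j : sorted ltn s -> i < size s -> j < size s ->
  (nth 0 s i < nth 0 s j) = (i < j).
Proof.
move=> Hs Hi Hj; case: (ltnP i j) => Hij.
  by apply: (sorted_ltn_nth ltn_trans 0 Hs); rewrite ?inE.
apply/negbTE; rewrite -leqNgt.
have Hl : sorted leq s by move: Hs; rewrite ltn_sorted_uniq_leq => /andP[].
by apply: (sorted_leq_nth leq_trans leqnn 0 Hl); rewrite ?inE.
Qed.

Lemma nth_leE (s : seq nat) i j : sorted ltn s -> i < size s -> j < size s ->
  (nth 0 s i <= nth 0 s j) = (i <= j).
Proof. by move=> Hs Hi Hj; rewrite leqNgt nth_ltE // -leqNgt. Qed.

Lemma idxP (s : seq nat) x : x \in s -> nth 0 s (index x s) = x /\ index x s < size s.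
Proof. by move=> H; rewrite nth_index // index_mem. Qed.

Lemma single_eq (l : seq nat) a : uniq l -> l =i [:: a] -> l = [:: a].
Proof.
move=> Hu Hm.
have P : perm_eq l [:: a] by apply: uniq_perm.
have := perm_size P.
case: l Hm {Hu P} => [|y [|z l]] Hm //= Hsz.
have := Hm y; rewrite !inE eqxx => /esym/eqP ->. by [].
Qed.

Lemma mem_nth0 (s : seq nat) i : i < size s -> nth 0 s i \in s.
Proof. exact: mem_nth. Qed.

Section S.
Variables (s : seq nat) (m : nat).
Hypothesis Hs : sorted ltn s.
Hypothesis Hpos : forall z, z \in s -> 0 < z.
Hypothesis Hgap : forall z x y, z \in s -> 0 < x -> 0 < y -> x + y = z -> (x \in s) || (y \in s).
Hypothesis Hm0 : 0 < m.
Hypothesis Hmn : m \notin s.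
Hypothesis Hml : forall k, 0 < k -> k < m -> k \in s.

Lemma nongap_add a b : 0 < a -> 0 < b -> a \notin s -> b \notin s -> a + b \notin s.
Proof.
move=> a0 b0 Ha Hb; apply/negP => H; have := Hgap H a0 b0 (erefl _).
by rewrite (negbTE Ha) (negbTE Hb).
Qed.

Lemma run x : 0 < x -> (forall j, j < m -> x + j \notin s) -> forall y, x <= y -> y \notin s.
Proof.
move=> x0 Hr y; elim: y {-2}y (leqnn y) => [|N IH] y Hy Hxy; first by lia.
case: (ltnP y (x + m)) => Hl.
  by have := Hr (y - x) ltac:(lia); rewrite subnKC.
have -> : y = (y - m) + m by lia.
apply: nongap_add => //; first by lia.
apply: IH; lia.
Qed.

Lemma down x : x \in s -> m < x -> x - m \in s.
Proof.
move=> Hx Hlt; have h1 : 0 < x - m by lia.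
have h2 : x - m + m = x by lia.
by have := Hgap Hx h1 Hm0 h2; rewrite (negbTE Hmn) orbF.
Qed.

Lemma sym : 0 < size s -> frobenius s = 2 * size s - 1 -> forall y, y \in s -> frobenius s - y \notin s.
Proof.
set F := frobenius s => s0 HF.
have Hu : uniq s := sorted_uniq ltn_trans ltnn Hs.
have Fin : F \in s by rewrite /F /frobenius /ell mem_nth // prednK.
have Fmax : forall x, x \in s -> x <= F.
  move=> x Hx; case: (idxP Hx) => Hn Hi.
  rewrite -Hn /F /frobenius /ell nth_leE //; lia.
pose r := iota 0 F.+1.
have cA : count (mem s) r = size s.
  rewrite -size_filter; apply: perm_size; apply: uniq_perm.
  - exact: filter_uniq (iota_uniq _ _).
  - exact: Hu.
  move=> x; rewrite mem_filter mem_iota /=; case Hx: (x \in s) => //=.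
  by have := Fmax _ Hx; lia.
have cB : count (fun k => F - k \notin s) r = size s.
  have -> : count (fun k => F - k \notin s) r = count (predC (mem s)) (map (subn F) r)
    by rewrite count_map.
  have Pm : perm_eq (map (subn F) r) r.
    apply: uniq_perm; last 2 first.
    - exact: iota_uniq.
    - move=> x; rewrite mem_iota; apply/mapP/idP.
        by case=> k _ ->; lia.
      by move=> Hx; exists (F - x); [rewrite mem_iota; lia | lia].
    rewrite map_inj_in_uniq ?iota_uniq // => a b; rewrite !mem_iota; lia.
  rewrite (permP Pm).
  have := count_predC (mem s) r; rewrite size_iota cA; lia.
have BA : forall k, k \in r -> F - k \notin s -> k \in s.
  move=> k; rewrite mem_iota => Hk HB; apply/negPn/negP => HA.
  case: (posnP k) => k0.
    by move: HB; rewrite k0 subn0 Fin.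
  case: (k =P F) => kF; first by rewrite kF Fin in HA.
  have h1 : 0 < F - k by lia.
  have h2 : k + (F - k) = F by lia.
  by have := Hgap Fin k0 h1 h2; rewrite (negbTE HA) (negbTE HB).
move=> y Hy.
have H1 := count_predC (fun k => F - k \notin s) (filter (mem s) r).
rewrite count_filter size_filter cA in H1.
have H2 : count (predI (fun k => F - k \notin s) (mem s)) r = size s.
  rewrite -cB; apply: eq_in_count => k Hk /=; case HB: (F - k \notin s) => //=.
  exact: BA.
rewrite H2 in H1.
have H3 : count (predC (fun k => F - k \notin s)) (filter (mem s) r) = 0 by lia.
have H4 : ~~ has (predC (fun k => F - k \notin s)) (filter (mem s) r) by rewrite has_count H3.
have Hle := Fmax _ Hy.
have Hyr : y \in filter (mem s) r by rewrite mem_filter mem_iota; apply/andP; split; [exact: Hy | lia].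
by move/hasPn: H4 => /(_ y Hyr) /=; rewrite negbK.
Qed.

End S.

Theorem mainTheorem9 (n : nat) (s : seq nat) (m : nat) :
  0 < n ->
  is_gapset s ->
  genus s = 3 * n + 1 ->
  symmetric_gapset s ->
  pure_sparse (2 * n) s ->
  is_multiplicity s m ->
  let g := genus s in
  depth s m = 4 /\
  s = block s m 0 ++ block s m 1 ++ block s m 2 ++ block s m 3 /\
  block s m 3 = [:: ell s g] /\ block s m 2 = [:: ell s g.-1] /\
  ell s g.-1 = 2 * m + 1 /\ ell s g = 3 * m + 1 /\
  size (block s m 1) = n /\
  alpha (2 * n) s = g - 1.
Proof.
move=> n0 [Hs [Hpos Hgap]] Hg Hsym [Hsp1 [i0 Hi0 Hi0e]] [Hm0 [Hmn Hml]] g.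
rewrite /g /genus.
rewrite /symmetric_gapset /genus in Hg Hsym.
have Hu : uniq s := sorted_uniq ltn_trans ltnn Hs.
have HF : frobenius s = 6*n+1 by rewrite Hsym Hg; lia.
have Hsy : forall y, y \in s -> 6*n+1 - y \notin s.
  by move=> y Hy; rewrite -HF; apply: (sym Hs Hgap Hm0 Hmn) => //; lia.
have HFn : nth 0 s (3*n) = 6*n+1.
  by move: HF; rewrite /frobenius /ell Hg addn1.
have Fin : 6*n+1 \in s by rewrite -HFn; apply: mem_nth0; lia.
have Fmax : forall x, x \in s -> x <= 6*n+1.
  move=> x Hx; case: (idxP Hx) => Hn Hi; rewrite -Hn -HFn nth_leE //; lia.
set e := nth 0 s (3*n - 1).
have ein : e \in s by apply: mem_nth0; lia.
have eltF : e < 6*n+1 by rewrite /e -HFn nth_ltE //; lia.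
have ebig : forall x, x \in s -> x < 6*n+1 -> x <= e.
  move=> x Hx; case: (idxP Hx) => Hn Hi; rewrite -Hn -HFn => Hlt.
  have Hlt' : index x s < 3 * n by rewrite -(@nth_ltE s) //; lia.
  rewrite /e nth_leE //; lia.
have mle : m <= 3*n+2.
  have : size (iota 1 m.-1) <= size s.
    apply: uniq_leq_size; first exact: iota_uniq.
    move=> k; rewrite mem_iota => Hk; apply: Hml; lia.
  rewrite size_iota Hg; lia.
have mge : 2*n <= m.
  rewrite leqNgt; apply/negP => Hlt.
  change (nth 0 s i0 - nth 0 s i0.-1 = 2*n) in Hi0e; rewrite -subn1 in Hi0e.
  have Hb : nth 0 s i0 \in s by apply: mem_nth0; lia.
  have Hr : forall j, j < m -> nth 0 s (i0 - 1) + 1 + j \notin s.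
    move=> j Hj; apply/negP => Hx; case: (idxP Hx) => Hn Hi.
    set x := nth 0 s (i0 - 1) + 1 + j in Hn Hi.
    have L1 := @nth_ltE s (i0 - 1) (index x s) Hs ltac:(lia) Hi.
    have L2 := @nth_ltE s (index x s) i0 Hs Hi ltac:(lia).
    rewrite Hn in L1 L2.
    have h1 : nth 0 s (i0 - 1) < x by rewrite /x; lia.
    have h2 : x < nth 0 s i0 by rewrite /x; lia.
    rewrite L1 in h1; rewrite L2 in h2; lia.
  have := @run s m Hs Hgap Hm0 Hmn (nth 0 s (i0 - 1) + 1) ltac:(lia) Hr (nth 0 s i0) ltac:(lia).
  by rewrite Hb.
have Fm : m < 6*n+1 by lia.
have Fmin : 6*n+1 - m \in s := down Hs Hgap Hm0 Hmn Fin Fm.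
have eq_e : e = 6*n+1 - m.
  apply/eqP; rewrite eqn_leq; apply/andP; split.
  - rewrite leqNgt; apply/negP => Hlt.
    have k : 6*n+1 - e \in s by apply: Hml; lia.
    have := Hsy _ k; have -> : 6*n+1 - (6*n+1 - e) = e by lia.
    by rewrite ein.
  - apply: ebig => //; lia.
have mle2 : m <= 2*n.
  have := Hsp1 (3*n) ltac:(lia).
  change (nth 0 s (3*n) - nth 0 s (3*n).-1 <= 2*n -> m <= 2*n); rewrite -subn1 -/e HFn; lia.
have mE : m = 2*n by lia.
subst m.
have ellg : ell s (size s) = 6*n+1 by rewrite Hg /ell addn1; exact: HFn.
have e4 : e = 4*n+1 by rewrite eq_e; lia.
have ellg1 : ell s (size s).-1 = 4*n+1.
  rewrite Hg addn1 /ell; change (nth 0 s (3*n).-1 = 4*n+1); rewrite -subn1 -/e e4 //.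
rewrite ellg ellg1.
clear ellg ellg1 Hsp1 Hi0 Hi0e i0 Hsym mle mge mle2 Fm Fmin eltF Hsy.
have n4 : 4*n \notin s.
  have -> : 4*n = 2*n+2*n by lia.
  by apply: nongap_add => //; lia.
have n6 : 6*n \notin s.
  have -> : 6*n = 2*n+4*n by lia.
  by apply: nongap_add => //; lia.
have Hrange : forall x, x \in s -> [/\ 0 < x, x <= 6*n+1, x != 2*n, x != 4*n & x != 6*n].
  move=> x Hx; split; [exact: Hpos | exact: Fmax | | |];
    by apply/eqP => E; rewrite E in Hx; rewrite Hx in Hmn n4 n6.
have b3 : block s (2*n) 3 = [:: 6*n+1].
  rewrite /block; apply: single_eq; first exact: filter_uniq.
  move=> x; rewrite mem_filter inE; case Hx: (x \in s); rewrite ?andbT ?andbF.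
  - have := Fmax _ Hx => Hle.
    by apply/andP/eqP => [[h1 h2]|h]; [|split]; lia.
  - by apply/esym/eqP => E; rewrite E Fin in Hx.
have b2 : block s (2*n) 2 = [:: 4*n+1].
  rewrite /block; apply: single_eq; first exact: filter_uniq.
  move=> x; rewrite mem_filter inE; case Hx: (x \in s); rewrite ?andbT ?andbF.
  - have := Fmax _ Hx => Hle.
    apply/andP/eqP => [[h1 h2]|h]; [|split; lia].
    have := ebig _ Hx ltac:(lia); lia.
  - by apply/esym/eqP => E; rewrite E -e4 ein in Hx.
have b0 : size (block s (2*n) 0) = 2*n-1.
  rewrite /block.
  have P : perm_eq [seq x <- s | (0 * (2*n) < x) && (x < 1 * (2*n))] (iota 1 (2*n-1)).
    apply: uniq_perm; [exact: filter_uniq | exact: iota_uniq |].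
    move=> x; rewrite mem_filter mem_iota; case Hx: (x \in s); rewrite ?andbT ?andbF.
    - have [h1 h2 h3 h4 h5] := Hrange _ Hx.
      by apply/idP/idP => /andP [h6 h7]; apply/andP; split; lia.
    - apply/esym/negbTE/negP => /andP [h6 h7].
      have : x \in s by apply: Hml; lia.
      by rewrite Hx.
  by rewrite (perm_size P) size_iota.
have pw : forall i, pairwise ltn (block s (2*n) i).
  by move=> i; rewrite -(sorted_pairwise ltn_trans); exact: (sorted_filter ltn_trans _ Hs).
have ar : forall i j, i < j -> allrel ltn (block s (2*n) i) (block s (2*n) j).
  move=> i j Hij; apply/allrelP => x y; rewrite !mem_filter.
  move=> /andP[/andP[_ h1] _] /andP[/andP[h2 _] _].
  have h3 : i.+1 * (2*n) <= j * (2*n) by rewrite leq_mul2r Hij orbT.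
  lia.
have Hcat : s = block s (2*n) 0 ++ block s (2*n) 1 ++ block s (2*n) 2 ++ block s (2*n) 3.
  apply: (irr_sorted_eq ltn_trans ltnn) => //.
    by rewrite (sorted_pairwise ltn_trans) !pairwise_cat !allrel_catr !ar // !pw.
  move=> x; rewrite !mem_cat !mem_filter; case Hx: (x \in s); rewrite ?andbT ?andbF //.
  apply: esym.
  have [h1 h2 h3 h4 h5] := Hrange _ Hx.
  case: (ltnP x (2*n)) => c1; first by apply/orP; left; lia.
  case: (ltnP x (4*n)) => c2; first by apply/orP; right; apply/orP; left; lia.
  case: (ltnP x (6*n)) => c3; first by apply/orP; right; apply/orP; right; apply/orP; left; lia.
  by apply/orP; right; apply/orP; right; apply/orP; right; lia.
split.
  rewrite /depth /conductor HF.
  have -> : (6*n+1).+1 + 2*n - 1 = 4*(2*n) + 1 by lia.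
  rewrite divnMDl; last lia.
  rewrite divn_small; [by rewrite addn0 | lia].
split; first exact: Hcat.
split; first by rewrite b3.
split; first by rewrite b2.
split; first lia.
split; first lia.
split.
  have := congr1 size Hcat; rewrite !size_cat b0 b2 b3 /= Hg; lia.
rewrite /alpha; apply/eqP; rewrite eqn_leq; apply/andP; split.
  apply/bigmax_leqP_seq => i; rewrite mem_index_iota => Hi _; lia.
have P3 : ell s (3*n).+1 - ell s (3*n) == 2*n.
  change (nth 0 s (3*n) - nth 0 s (3*n).-1 == 2*n); rewrite -subn1 -/e HFn e4; apply/eqP; lia.
have Hin : 3*n \in index_iota 1 (size s) by rewrite mem_index_iota; lia.
have -> : size s - 1 = 3*n by rewrite Hg; lia.
exact: (@leq_bigmax_seq _ _ _ (fun i => i) _ Hin P3).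
Qed.
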